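(* Let $P=\langle V,E,v_0\rangle$ be a CFA, let $\pi_1,\ldots,\pi_k$ be looping traces of $P$ with heads $v_1,\ldots,v_k$, let $\hat{\pi}_1,\ldots,\hat{\pi}_k$ be (possibly under-approximating) accelerators for them, and let $\hat{P}$ be the accelerated CFA obtained from $P$ by adding, for each $j$, a non-branching path from $v_j$ to $v_j$ labelled by $\hat{\pi}_j$. Then: (1) every trace of $P$ is subsumed by at least one trace of $\hat{P}$; (2) if $\rho_1$ is an accelerated trace accepted by $\hat{P}$ and $\langle\sigma_0,\sigma\rangle\in[\![\rho_1]\!]$, then there exists a trace $\rho_2$ accepted by $P$ with $\langle\sigma_0,\sigma\rangle\in[\![\rho_2]\!]$.
   Context: Programs are over a finite set of program variables; a state assigns a value to each variable. Statements are assignments $x:=e$, nondeterministic assignments $x:=*$, assumptions $[B]$ (identity restricted to states satisfying predicate $B$), and $\mathsf{skip}$; each statement $s$ denotes a relation $[\![s]\!]$ on states, and a trace (finite statement sequence) denotes the relational composition of its statements in order (empty trace: identity); $[\![\pi]\!]^0$ is the identity and $[\![\pi]\!]^n=[\![\pi]\!]\circ[\![\pi]\!]^{n-1}$. A CFA $P=\langle V,E,v_0\rangle$ has finite vertex set $V$, edges $E\subseteq V\times\mathsf{Stmts}_P\times V$ labelled with statements, and initial vertex $v_0$. A trace of a CFA is the label sequence of a path in it; it is looping with head $v$ if the path starts and ends at $v$, and accepted if the path starts at $v_0$. An accelerator for a looping trace $\pi$ is a statement sequence $\hat{\pi}$ with $[\![\hat{\pi}]\!]=\bigcup_{i\ge0}[\![\pi]\!]^i$;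 an under-approximating accelerator is a statement sequence $\hat{\pi}$ with a function $\beta$ from states to $\mathbb{N}_0$ such that $\langle\sigma,\sigma'\rangle\in[\![\hat{\pi}]\!]$ iff $\exists i\le\beta(\sigma)$ with $\langle\sigma,\sigma'\rangle\in[\![\pi]\!]^i$, where $\beta$ satisfies: $i\le\beta(\sigma)$ and $\langle\sigma,\sigma'\rangle\in[\![\pi]\!]^i$ imply $\beta(\sigma')\le\beta(\sigma)-i$. A trace of $\hat{P}$ is accelerated if it traverses one of the added accelerator paths. A trace $\rho$ is subsumed by a trace $\rho'$ if $[\![\rho]\!]\subseteq[\![\rho']\!]$. *)

(* Defs.v *)
From mathcomp Require Import all_boot.
From Stdlib Require List.
Set Implicit Arguments. Unset Strict Implicit. Unset Printing Implicit Defensive.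

Section Programs.
Variables (Var : finType) (Val : Type).

Definition state := Var -> Val.

Definition upd (s : state) (x : Var) (v : Val) : state :=
  fun y => if y == x then v else s y.

Inductive stmt :=
| Assign of Var & (state -> Val)
| Havoc of Var
| Assume of (state -> Prop)
| Skip.

Definition rel := state -> state -> Prop.

Definition sem_stmt (st : stmt) : rel :=
  match st with
  | Assign x e => fun s s' => s' = upd s x (e s)
  | Havoc x => fun s s' => forall y, y <> x -> s' y = s y
  | Assume B => fun s s' => s' = s /\ B s
  | Skip => fun s s' => s' = s
  end.

Fixpoint sem (t : seq stmt) : rel :=
  match t with
  | nil => fun s s' => s' = s
  | st :: t' => fun s s'' => exists s', sem_stmt st s s' /\ sem t' s' s''
  end.

Fixpoint sem_pow (t : seq stmt) (n : nat) : rel :=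
  match n with
  | 0 => fun s s' => s' = s
  | n'.+1 => fun s s'' => exists s', sem t s s' /\ sem_pow t n' s' s''
  end.

Definition subsumed (r r' : seq stmt) : Prop :=
  forall s s', sem r s s' -> sem r' s s'.

Definition accelerator (pi hat : seq stmt) : Prop :=
  forall s s', sem hat s s' <-> exists i, sem_pow pi i s s'.

Definition ua_accelerator (pi hat : seq stmt) : Prop :=
  exists beta : state -> nat,
    (forall s s', sem hat s s' <-> exists2 i, i <= beta s & sem_pow pi i s s') /\
    (forall s s' i, i <= beta s -> sem_pow pi i s s' -> beta s' <= beta s - i).

Record CFA (Vt : Type) := mkCFA {
  cfa_V : seq Vt;
  cfa_E : seq (Vt * stmt * Vt);
  cfa_v0 : Vt }.

Definition wf_CFA Vt (P : CFA Vt) : Prop :=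
  List.In (cfa_v0 P) (cfa_V P) /\
  forall a st b, List.In (a, st, b) (cfa_E P) -> List.In a (cfa_V P) /\ List.In b (cfa_V P).

Fixpoint is_path Vt (E : seq (Vt * stmt * Vt)) (u : Vt)
    (es : seq (Vt * stmt * Vt)) (w : Vt) : Prop :=
  match es with
  | nil => u = w
  | (a, st, b) :: es' => List.In (a, st, b) E /\ a = u /\ is_path E b es' w
  end.

Definition labels Vt (es : seq (Vt * stmt * Vt)) : seq stmt :=
  map (fun e => e.1.2) es.

Definition is_trace Vt (P : CFA Vt) (r : seq stmt) : Prop :=
  exists u w es, List.In u (cfa_V P) /\ is_path (cfa_E P) u es w /\ labels es = r.

Definition is_accepted Vt (P : CFA Vt) (r : seq stmt) : Prop :=
  exists w es, is_path (cfa_E P) (cfa_v0 P) es w /\ labels es = r.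

Definition looping_trace Vt (P : CFA Vt) (r : seq stmt) (v : Vt) : Prop :=
  List.In v (cfa_V P) /\ exists es, is_path (cfa_E P) v es v /\ labels es = r.

(** The accelerated CFA.  Vertices: inl v for the original ones, and
    inr (j, i), 1 <= i < size (hat j), for the intermediate vertices of the
    j-th accelerator path. *)
Section Accel.
Variables (Vt : Type) (P : CFA Vt) (k : nat) (hd : 'I_k -> Vt)
          (hat : 'I_k -> seq stmt).

Definition AVt := (Vt + ('I_k * nat))%type.

Definition acc_src (j : 'I_k) (i : nat) : AVt :=
  if i == 0 then inl (hd j) else inr (j, i).
Definition acc_tgt (j : 'I_k) (i : nat) : AVt :=
  if i.+1 == size (hat j) then inl (hd j) else inr (j, i.+1).

Definition acc_edges (j : 'I_k) : seq (AVt * stmt * AVt) :=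
  [seq (acc_src j i, nth Skip (hat j) i, acc_tgt j i) | i <- iota 0 (size (hat j))].

Definition acc_verts (j : 'I_k) : seq AVt :=
  [seq inr (j, i) | i <- iota 1 (size (hat j)).-1].

Definition accel_CFA : CFA AVt :=
  {| cfa_V := map inl (cfa_V P) ++ flatten [seq acc_verts j | j <- enum 'I_k];
     cfa_E := [seq (inl e.1.1, e.1.2, inl e.2) | e <- cfa_E P]
              ++ flatten [seq acc_edges j | j <- enum 'I_k];
     cfa_v0 := inl (cfa_v0 P) |}.

(** Traces of the accelerated CFA: paths between original vertices
    (accelerator paths are traversed entirely). *)
Definition hat_trace (r : seq stmt) : Prop :=
  exists u w es, List.In u (cfa_V P) /\
    is_path (cfa_E accel_CFA) (inl u) es (inl w) /\ labels es = r.

Definition hat_accepted (r : seq stmt) : Prop :=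
  exists w es, is_path (cfa_E accel_CFA) (inl (cfa_v0 P)) es (inl w) /\ labels es = r.

Definition hat_accelerated (r : seq stmt) : Prop :=
  exists u w es, List.In u (cfa_V P) /\
    is_path (cfa_E accel_CFA) (inl u) es (inl w) /\ labels es = r /\
    exists e j, List.In e es /\ List.In e (acc_edges j).

End Accel.
End Programs.

(* Main.v *)
Require Import Defs.
From mathcomp Require Import all_boot.
From Stdlib Require List.
Set Implicit Arguments.

Section Helpers.
Variables (Var : finType) (Val : Type).

Lemma sem_cat (a b : seq (stmt Var Val)) s s'' :
  sem (a ++ b) s s'' <-> exists s', sem a s s' /\ sem b s' s''.
Proof.
elim: a s => [|st a IH] s /=.
  split; [move=> H; exists s; done | by move=> [s' [-> H]]].
split.
  move=> [s1 [H1 H2]]; case/IH: H2 => s2 [H2 H3].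
  by exists s2; split => //; exists s1.
move=> [s2 [[s1 [H1 H2]] H3]]; exists s1; split => //.
by apply/IH; exists s2.
Qed.

Lemma is_path_cat Vt (E : seq (Vt * stmt Var Val * Vt)) u es1 v es2 w :
  is_path E u es1 v -> is_path E v es2 w -> is_path E u (es1 ++ es2) w.
Proof.
elim: es1 u => [|[[a st] b] es1 IH] u /=; first by move=> ->.
by move=> [H1 [H2 H3]] H4; split => //; split => //; apply: IH H3 H4.
Qed.

Lemma labels_cat Vt (es1 es2 : seq (Vt * stmt Var Val * Vt)) :
  labels (es1 ++ es2) = labels es1 ++ labels es2.
Proof. by rewrite /labels map_cat. Qed.

Lemma in_flatten_map (A B : Type) (f : A -> seq B) (l : seq A) e :
  List.In e (flatten (map f l)) -> exists j, List.In e (f j).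
Proof.
elim: l => [|a l IH] //= H.
case: (List.in_app_or _ _ _ H) => H'; first by exists a.
exact: IH.
Qed.

Lemma in_iota_lt i m n : List.In i (iota m n) -> i < m + n.
Proof.
elim: n m => [|n IH] m //= [<-|H]; first by rewrite addnS ltnS leq_addr.
by rewrite addnS -addSn; apply: IH.
Qed.

End Helpers.

Theorem theorem1 (Var : finType) (Val : Type) (Vt : Type)
    (P : CFA Var Val Vt) (k : nat)
    (pi hat : 'I_k -> seq (stmt Var Val)) (hd : 'I_k -> Vt) :
  wf_CFA P ->
  (forall j, looping_trace P (pi j) (hd j)) ->
  (forall j, accelerator (pi j) (hat j) \/ ua_accelerator (pi j) (hat j)) ->
  (forall r, is_trace P r ->
     exists r', hat_trace P hd hat r' /\ subsumed r r') /\
  (forall r1 s0 s, hat_accepted P hd hat r1 -> hat_accelerated P hd hat r1 ->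
     sem r1 s0 s ->
     exists r2, is_accepted P r2 /\ sem r2 s0 s).
Proof.
move=> _ Hloop Hacc; split.
  move=> r [u [w [es [Hu [Hp Hl]]]]].
  exists r; split => //.
  exists u, w, (map (fun e => (inl e.1.1, e.1.2, inl e.2)) es); split => //.
  split; last by rewrite -Hl /labels -map_comp.
  elim: es u Hp {Hl Hu} => [|[[a st] b] es IH] u /=; first by move=> ->.
  move=> [H1 [H2 H3]]; split; last by split; [rewrite H2 | apply: IH].
  apply: List.in_or_app; left.
  exact: (List.in_map (fun e => (inl e.1.1, e.1.2, inl e.2)) _ (a, st, b)).
have Hhat : forall j s0 s1, sem (hat j) s0 s1 ->
    exists es, is_path (cfa_E P) (hd j) es (hd j) /\ sem (labels es) s0 s1.
  move=> j s0 s1 H.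
  have [n Hn] : exists n, sem_pow (pi j) n s0 s1.
    case: (Hacc j) => [Ha | [beta [Hb _]]].
      by apply/Ha.
    by case/Hb: H => i _ Hi; exists i.
  case: (Hloop j) => _ [esl [Hpl Hll]].
  elim: n s0 {H} Hn => [|n IH] s0 /=.
    by move=> ->; exists [::].
  move=> [s' [H1 H2]]; case: (IH _ H2) => es [Hp Hs].
  exists (esl ++ es); split; first exact: is_path_cat Hpl Hp.
  by rewrite labels_cat; apply/sem_cat; exists s'; rewrite Hll.
set E' := cfa_E (accel_CFA P hd hat).
have Main : forall es (x : AVt Vt k) w s0 s,
    is_path E' x es (inl w) -> sem (labels es) s0 s ->
    match x with
    | inl u => exists es', is_path (cfa_E P) u es' w /\ sem (labels es') s0 s
    | inr (j, i) => exists s1, sem (drop i (hat j)) s0 s1 /\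
         exists es', is_path (cfa_E P) (hd j) es' w /\ sem (labels es') s1 s
    end.
  elim=> [|[[a st] b] es IH] x w s0 s /=.
    by move=> -> ->; exists [::].
  move=> [Hin [Ha Hp]] [s' [Hst Hs]].
  have IHb := IH _ _ _ _ Hp Hs.
  case: (List.in_app_or _ _ _ Hin) => Hin'.
    case/List.in_map_iff: Hin' => [[[a0 st0] b0] [[Ea Est Eb] Hin0]].
    subst a st b x => /=.
    case: IHb => es' [Hp' Hs'].
    exists ((a0, st0, b0) :: es'); split => //=.
    by exists s'.
  case: (@in_flatten_map _ _ _ _ _ Hin') => j Hj.
  case/List.in_map_iff: Hj => i [[Ea Est Eb] Hi].
  have Hi' : i < size (hat j) by have := @in_iota_lt _ _ _ Hi.
  have C : exists s1, sem (drop i (hat j)) s0 s1 /\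
      exists es', is_path (cfa_E P) (hd j) es' w /\ sem (labels es') s1 s.
    rewrite (drop_nth (Skip Var Val) Hi').
    move: Eb IHb; rewrite /acc_tgt; case: eqP => Hsz <-.
      case=> es' [Hp' Hs']; exists s'; split; last by exists es'.
      by rewrite drop_oversize ?Hsz //; exists s'; rewrite Est.
    case=> s1 [H1 H2]; exists s1; split => //.
    by exists s'; rewrite Est.
  move: Ea; rewrite /acc_src; case: eqP => Hi0 Ea; subst a x.
    case: C => s1 [H1 [es' [Hp' Hs']]].
    rewrite Hi0 drop0 in H1.
    case: (Hhat _ _ _ H1) => es0 [Hp0 Hs0].
    exists (es0 ++ es'); split; first exact: is_path_cat Hp0 Hp'.
    by rewrite labels_cat; apply/sem_cat; exists s1.
  exact: C.
move=> r1 s0 s [w [es [Hp Hl]]] _ Hs.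
rewrite -Hl in Hs.
case: (Main _ _ _ _ _ Hp Hs) => es' [Hp' Hs'].
by exists (labels es'); split => //; exists w, es'.
Qed.
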